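(* Let $\mathcal{H}$ be a Hilbert space of dimension $d$ with $2\le d<\infty$, let $X$ be a set with $d^2$ elements, and let $\mathbf{U}=\{U_x:x\in X\}$ and $\mathbf{U}'=\{U'_x:x\in X\}$ be unitary bases for $\mathcal{H}$. Then the following are equivalent: (i) $\mathbf{U}$ is phase-equivalent to $\mathbf{U}'$; (ii) for some $\mathbf{U}$-associated tag $(x_0,U_{x_0},\mathbf{W})$ and some $\mathbf{U}'$-associated tag $(x_0',U'_{x_0'},\mathbf{W}')$, $\mathbf{W}$ is phase-collectively-unitarily equivalent to $\mathbf{W}'$; (iii) for each $\mathbf{U}$-associated tag $(x_0,U_{x_0},\mathbf{W})$ there is a $\mathbf{U}'$-associated tag $(x_0',U'_{x_0'},\mathbf{W}')$ such that $\mathbf{W}$ is phase-collectively-unitarily equivalent to $\mathbf{W}'$; (iv) $\mathbf{U}$ and $\mathbf{U}'$ have the same fan systems to within phase-collective-unitary equivalence.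
   Context: $S^1$ is the unit circle in $\mathbb{C}$. A unitary basis is a family $\mathbf{U}=\{U_x:x\in X\}$ of unitaries on $\mathcal{H}$ with $\operatorname{tr}(U_x^*U_y)=d\,\delta_{xy}$. Unitary bases $\mathbf{U},\mathbf{U}'$ are equivalent if there are unitaries $V_1,V_2$ and a bijection $x\mapsto x'$ of $X$ with $U'_{x'}=V_1U_xV_2$ for all $x$; they are phase-equivalent if there is a function $f:X\to S^1$ such that $\{f(x)U'_x:x\in X\}$ is equivalent to $\{U_x:x\in X\}$. For $x_0\in X$, the $\mathbf{U}$-associated tag at $x_0$ is $(x_0,U_{x_0},\mathbf{W})$ with $\mathbf{W}=\{U_{x_0}^*U_x: x\in X, x\ne x_0\}$; this $\mathbf{W}$ is a unitary system, i.e. a set of unitaries $W_y$ with $\operatorname{tr}W_y=0$ and $\operatorname{tr}(W_x^*W_y)=d\delta_{xy}$. For sets $\mathcal{F},\mathcal{G}$ of operators: $\mathcal{F}$ is collectively unitarily equivalent (CUE) to $\mathcal{G}$ (via $V$) if there is a unitary $V$ with $\mathcal{G}=\{V^*AV:A\in\mathcal{F}\}$; $\mathcal{F}$ is phase-collectively-unitarily equivalent (PCUE) to $\mathcal{G}$ if there is a function $f:\mathcal{F}\to S^1$ with $\{f(A)A:A\in\mathcal{F}\}$ CUE $\mathcal{G}$. A $\mathbf{W}$-MASS is a subset of $\mathbf{W}$ consisting of pairwise commuting elements and maximal with this property; the fan representation $\mathcal{V}_{\mathbf{W}}$ of $\mathbf{W}$ is the family of all $\mathbf{W}$-MASS's (whose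 union is $\mathbf{W}$). The fan system of $\mathbf{U}$ is $\{\mathcal{V}_{\mathbf{W}} : (x_0,U_{x_0},\mathbf{W})$ is the $\mathbf{U}$-associated tag at $x_0$, $x_0\in X\}$. Two fans $\{\mathbf{V}_\alpha:\alpha\in\Lambda\}$ (of $\mathbf{W}$) and $\{\mathbf{V}'_\beta:\beta\in\Lambda'\}$ (of $\mathbf{W}'$) are PCUE if there exist a unitary $V$, a function $h:\mathbf{W}\to S^1$ and a bijection $\alpha\mapsto\alpha'$ of $\Lambda$ onto $\Lambda'$ with $\{h(A)A: A\in\mathbf{V}_\alpha\}$ CUE $\mathbf{V}'_{\alpha'}$ via $V$ for every $\alpha$; two fan systems are the same to within PCUE if every fan in either is PCUE to some fan in the other. *)

(* Defs.v *)
From HB Require Import structures.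
From mathcomp Require Import all_boot all_order all_algebra.
From mathcomp Require Export spectral.
Set Implicit Arguments. Unset Strict Implicit. Unset Printing Implicit Defensive.
Import Order.TTheory GRing.Theory Num.Theory.
Local Open Scope ring_scope.
Local Open Scope sesquilinear_scope.

(* The Hilbert space H of dimension d is modelled as C^d, operators as
   'M[C]_d, the adjoint as the conjugate transpose  A ^t*  (spectral.v),
   and unitarity as  A \is unitarymx  (A *m A^t* = 1). *)

Section UnitaryBases.
Variables (C : numClosedFieldType) (d : nat).
Local Notation M := 'M[C]_d.

Definition adjmx (A : M) : M := A ^t*.

Definition opset := M -> Prop.

Definition unitary_basis (X : finType) (U : X -> M) : Prop :=
  (forall x, U x \is unitarymx) /\
  (forall x y, \tr (adjmx (U x) *m U y) = if x == y then d%:R else 0).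

Definition equiv_basis (X : finType) (U U' : X -> M) : Prop :=
  exists (V1 V2 : M) (s : X -> X),
    [/\ V1 \is unitarymx, V2 \is unitarymx, bijective s &
        forall x, U' (s x) = V1 *m U x *m V2].

Definition phase_equiv (X : finType) (U U' : X -> M) : Prop :=
  exists f : X -> C, (forall x, `|f x| = 1) /\
    equiv_basis (fun x => f x *: U' x) U.

Definition tagW (X : finType) (U : X -> M) (x0 : X) : opset :=
  fun A => exists2 x, x != x0 & A = adjmx (U x0) *m U x.

Definition CUE_via (F G : opset) (V : M) : Prop :=
  V \is unitarymx /\
  (forall B, G B <-> exists2 A, F A & B = adjmx V *m A *m V).

Definition CUE (F G : opset) : Prop := exists V, CUE_via F G V.

Definition phase_image (f : M -> C) (F : opset) : opset :=
  fun B => exists2 A, F A & B = f A *: A.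

Definition PCUE (F G : opset) : Prop :=
  exists f : M -> C, (forall A, F A -> `|f A| = 1) /\ CUE (phase_image f F) G.

Definition commuting_set (S : opset) : Prop :=
  forall A B, S A -> S B -> A *m B = B *m A.

Definition MASS (W S : opset) : Prop :=
  [/\ forall A, S A -> W A,
      commuting_set S &
      forall S', (forall A, S A -> S' A) -> (forall A, S' A -> W A) ->
                 commuting_set S' -> forall A, S' A -> S A].

(* the fan representation of W is the family of all W-MASSes,
   i.e. the collection  MASS W : opset -> Prop  (indexed by itself). *)
Definition fan (W : opset) : opset -> Prop := MASS W.

Definition fan_PCUE (W W' : opset) : Prop :=
  exists (V : M) (h : M -> C) (phi : opset -> opset),
    [/\ V \is unitarymx,
        (forall A, W A -> `|h A| = 1),
        (forall S, fan W S -> fan W' (phi S)),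
        (forall S1 S2, fan W S1 -> fan W S2 -> phi S1 = phi S2 -> S1 = S2) &
        (forall S', fan W' S' -> exists2 S, fan W S & phi S = S') /\
        (forall S, fan W S -> CUE_via (phase_image h S) (phi S) V)].

Definition same_fan_systems_PCUE (X : finType) (U U' : X -> M) : Prop :=
  (forall x0, exists x0', fan_PCUE (tagW U x0) (tagW U' x0')) /\
  (forall x0', exists x0, fan_PCUE (tagW U' x0') (tagW U x0)).

End UnitaryBases.

(* Main.v *)
Require Import Defs.
From HB Require Import structures.
From mathcomp Require Import all_boot all_order all_algebra.
From mathcomp Require Import spectral reals complex.
From Stdlib Require Import FunctionalExtensionality PropExtensionality.
Set Implicit Arguments. Unset Strict Implicit. Unset Printing Implicit Defensive.
Import Order.TTheory GRing.Theory Num.Theory.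
Local Open Scope ring_scope.

Section H.
Variables (C : numClosedFieldType) (d : nat).
Local Notation M := 'M[C]_d.

Lemma sAl (a : C) (A B : M) : (a *: A) *m B = a *: (A *m B).
Proof. by rewrite scalemxAl. Qed.
Lemma sAr (a : C) (A B : M) : A *m (a *: B) = a *: (A *m B).
Proof. by rewrite scalemxAr. Qed.
Lemma sA (a b : C) (A : M) : a *: (b *: A) = (a * b) *: A.
Proof. by rewrite scalerA. Qed.
Ltac floats := repeat (first [rewrite sAl | rewrite sAr]); rewrite ?sA.

Lemma uK (V : M) : V \is unitarymx -> V *m adjmx V = 1%:M.
Proof. by move/unitarymxP. Qed.

Lemma uKV (V : M) : V \is unitarymx -> adjmx V *m V = 1%:M.
Proof. by move=> Vu; have := mulmxKtV (1%:M : M) Vu erefl; rewrite mul1mx. Qed.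

Lemma cVV (V A : M) : V \is unitarymx -> A *m adjmx V *m V = A.
Proof. by move=> Vu; rewrite -mulmxA uKV // mulmx1. Qed.

Lemma adj_unitary (V : M) : V \is unitarymx -> adjmx V \is unitarymx.
Proof. by rewrite /adjmx trmxC_unitary. Qed.

Lemma adjM (A B : M) : adjmx (A *m B) = adjmx B *m adjmx A.
Proof. by rewrite /adjmx trmx_mul map_mxM. Qed.

Lemma adjZ (a : C) (A : M) : adjmx (a *: A) = a^* *: adjmx A.
Proof. by rewrite /adjmx linearZ /= map_mxZ. Qed.

Lemma uinjl (V A B : M) : V \is unitarymx -> V *m A = V *m B -> A = B.
Proof.
by move=> Vu e; rewrite -[A]mul1mx -[B]mul1mx -(uKV Vu) -!mulmxA e.
Qed.

Lemma uinjr (V A B : M) : V \is unitarymx -> A *m V = B *m V -> A = B.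
Proof.
by move=> Vu e; rewrite -[A]mulmx1 -[B]mulmx1 -(uK Vu) !mulmxA e.
Qed.

Definition cj (V A : M) := adjmx V *m A *m V.

Lemma cjM (V A B : M) : V \is unitarymx -> cj V A *m cj V B = cj V (A *m B).
Proof.
move=> Vu; rewrite /cj !mulmxA; congr (_ *m _).
by rewrite -!mulmxA (mulmxA V) (uK Vu) mul1mx.
Qed.

Lemma cjI (V A B : M) : V \is unitarymx -> cj V A = cj V B -> A = B.
Proof.
move=> Vu; rewrite /cj => e; apply: (uinjl (adj_unitary Vu)).
exact: (uinjr Vu).
Qed.

Lemma cjZ (V A : M) (a : C) : cj V (a *: A) = a *: cj V A.
Proof. by rewrite /cj -scalemxAr -scalemxAl. Qed.

Lemma unit_nz (a : C) : `|a| = 1 -> a != 0.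
Proof. by move=> h; rewrite -normr_eq0 h oner_eq0. Qed.

Lemma conj_unit (a : C) : `|a| = 1 -> a^* * a = 1.
Proof. by move=> h; rewrite -normCKC h expr1n. Qed.

Lemma comm_cj (V A B : M) (a b : C) : V \is unitarymx -> a != 0 -> b != 0 ->
  (cj V (a *: A) *m cj V (b *: B) = cj V (b *: B) *m cj V (a *: A)) <->
  (A *m B = B *m A).
Proof.
move=> Vu a0 b0; rewrite !cjM // -!scalemxAl -!scalemxAr !scalerA !cjZ [b * a]mulrC.
split; first by move/(scalemx_inj (mulf_neq0 a0 b0))/(cjI Vu).
by move=> ->.
Qed.


Lemma pcue_fan (W W' : opset C d) : PCUE W W' -> fan_PCUE W W'.
Proof.
case=> h [hu [V [Vu HV]]].
pose g A := cj V (h A *: A).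
pose phi (S : opset C d) : opset C d := fun B => exists2 A, S A & B = g A.
have gW : forall A, W A -> W' (g A).
  by move=> A WA; apply/HV; exists (h A *: A) => //; exists A.
have W'g : forall B, W' B -> exists2 A, W A & B = g A.
  by move=> B /HV [_ [A WA ->] ->]; exists A.
have gcomm : forall A B, W A -> W B ->
    (g A *m g B = g B *m g A <-> A *m B = B *m A).
  by move=> A B WA WB; apply: comm_cj => //; apply: unit_nz; apply: hu.
have fanphi : forall S, fan W S -> fan W' (phi S).
  move=> S [SW Scom Smax]; split.
  - by move=> B [A SA ->]; apply: gW; apply: SW.
  - by move=> B1 B2 [A1 S1 ->] [A2 S2 ->]; apply/gcomm; auto.
  - move=> S' sub S'W S'com B S'B.
    pose T := fun A => W A /\ S' (g A).
    have TS : forall A, T A -> S A.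
      apply: (Smax T).
      + by move=> A SA; split; [apply: SW | apply: sub; exists A].
      + by move=> A [].
      + by move=> A1 A2 [W1 S1] [W2 S2]; apply/gcomm => //; apply: S'com.
    case: (W'g B (S'W B S'B)) => A WA eB.
    by exists A => //; apply: TS; split => //; rewrite -eB.
have injsub : forall S1 S2, fan W S1 -> fan W S2 -> phi S1 = phi S2 ->
    forall A, S1 A -> S2 A.
  move=> S1 S2 [SW1 _ _] [SW2 Scom2 Smax2] e A SA.
  have : phi S2 (g A) by rewrite -e; exists A.
  case=> A2 S2A2 eg.
  have e' := cjI Vu eg.
  have hA0 : h A != 0 by apply: unit_nz; apply: hu; apply: SW1.
  have eA : A = ((h A)^-1 * h A2) *: A2.
    by rewrite -scalerA -e' scalerA mulVf // scale1r.
  apply: (Smax2 (fun B => S2 B \/ B = A)) => //; first by move=> B; left.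
    by move=> B [/SW2 | ->] //; apply: SW1.
  move=> B1 B2 [S1B | ->] [S2B | ->] //; first by apply: Scom2.
    by rewrite eA -scalemxAl -scalemxAr (Scom2 B1 A2).
  by rewrite eA -scalemxAl -scalemxAr (Scom2 A2 B2).
  by right.
exists V, h, phi; split => //.
- move=> S1 S2 F1 F2 e; apply: functional_extensionality => A.
  by apply: propositional_extensionality; split; apply: injsub.
- split.
  + move=> S' [S'W S'com S'max].
    pose S := fun A => W A /\ S' (g A).
    exists S.
      split; first by move=> A [].
        by move=> A1 A2 [W1 S1] [W2 S2]; apply/gcomm => //; apply: S'com.
      move=> S'' sub S''W S''com A S''A; split; first by apply: S''W.
      apply: (S'max (fun B => exists2 A, S'' A & B = g A)).
      * move=> B S'B; case: (W'g B (S'W B S'B)) => A0 WA0 eB.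
        by exists A0 => //; apply: sub; split => //; rewrite -eB.
      * by move=> B [A0 SA0 ->]; apply: gW; apply: S''W.
      * by move=> B1 B2 [A1 S1 ->] [A2 S2 ->]; apply/gcomm; auto.
      * by exists A.
    apply: functional_extensionality => B; apply: propositional_extensionality.
    split; first by case=> A [_ ?] ->.
    move=> S'B; case: (W'g B (S'W B S'B)) => A WA eB.
    by exists A => //; split => //; rewrite -eB.
  + move=> S FS; split => // B; split.
      by case=> A SA ->; exists (h A *: A) => //; exists A.
    by case=> A' [A SA ->] ->; exists A.
Qed.

Lemma fan_pcue (W W' : opset C d) : fan_PCUE W W' ->
  (forall A, W A -> exists2 S, fan W S & S A) ->
  (forall B, W' B -> exists2 S', fan W' S' & S' B) -> PCUE W W'.
Proof.
case=> V [h [phi [Vu hu Hf Hinj [Hsurj Hcue]]]] covW covW'.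
exists h; split => //; exists V; split => // B; split.
- move=> WB; case: (covW' B WB) => S' FS' S'B.
  case: (Hsurj S' FS') => S FS eS; subst S'.
  case: (Hcue S FS) => _ /(_ B) [/(_ S'B) [A' [A SA ->] ->] _].
  by exists (h A *: A) => //; exists A => //; case: FS => SW _ _; apply: SW.
- case=> A' [A WA ->] ->.
  case: (covW A WA) => S FS SA.
  case: (Hcue S FS) => _ /(_ (adjmx V *m (h A *: A) *m V)) [_ H].
  have := H (ex_intro2 _ _ (h A *: A) (ex_intro2 _ _ A SA erefl) erefl).
  by case: (Hf S FS) => SW _ _; apply: SW.
Qed.

Lemma mass_cover (Y : finType) (P : pred Y) (g : Y -> M) A :
  (exists2 y, P y & A = g y) ->
  exists2 S, fan (fun B => exists2 y, P y & B = g y) S & S A.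
Proof.
case=> y0 Py0 ->.
pose comm (T : {set Y}) :=
  [forall a in T, forall b in T, g a *m g b == g b *m g a].
pose good (T : {set Y}) := [&& T \subset P, y0 \in T & comm T].
have g0 : good [set y0].
  apply/and3P; split; [by apply/subsetP => z /set1P -> | exact: set11 |].
  apply/forallP => a; apply/implyP.
  by move=> /set1P ->; apply/forallP => b; apply/implyP => /set1P ->.
case: (@arg_maxnP _ [set y0] good (fun T : {set Y} => #|T|) g0) => T /and3P [TP Ty0 Tc] Tmax.
have Tc' : forall a b, a \in T -> b \in T -> g a *m g b = g b *m g a.
  move=> a b aT bT; move/forallP: Tc => /(_ a) /implyP /(_ aT).
  by move/forallP => /(_ b) /implyP /(_ bT) /eqP.
exists (fun B => exists2 y, y \in T & B = g y); last by exists y0.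
split.
- by move=> B [y yT ->]; exists y => //; apply: (subsetP TP).
- by move=> B1 B2 [a aT ->] [b bT ->]; apply: Tc'.
- move=> S' sub S'W S'com B S'B.
  case: (S'W B S'B) => y Py eB; exists y => //.
  apply: contraT => yT.
  have : good (y |: T).
    apply/and3P; split; [by apply/subsetP => z /setU1P [-> | /(subsetP TP)] | exact: setU1r |].
    have inS : forall a, a \in y |: T -> S' (g a).
      by move=> a /setU1P [-> | aT]; [rewrite -eB | apply: sub; exists a].
    apply/forallP => a; apply/implyP => aT; apply/forallP => b.
    by apply/implyP => bT; apply/eqP; apply: S'com; apply: inS.
  by move/Tmax; rewrite cardsU1 yT /= add1n ltnn.
Qed.

Variable X : finType.

Lemma inj_basis (U : X -> M) : (0 < d)%N -> unitary_basis U -> injective U.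
Proof.
move=> d0 [_ Htr] a b e.
have h1 := Htr a a; have h2 := Htr a b.
rewrite -e h1 eqxx in h2.
case: (a =P b) h2 => // _ /esym/eqP; rewrite eq_sym pnatr_eq0 => /eqP d00.
by rewrite d00 in d0.
Qed.

Lemma phase_sym (U U' : X -> M) : phase_equiv U U' -> phase_equiv U' U.
Proof.
case=> f [hf [V1 [V2 [s [V1u V2u [t st ts] Hs]]]]].
exists (fun y => (f (t y))^*); split; first by move=> y; rewrite norm_conjC hf.
exists (adjmx V1), (adjmx V2), t; split; try by apply: adj_unitary.
  by exists s.
move=> y /=; have := Hs (t y); rewrite ts /= => ->.
rewrite -?scalemxAl -?scalemxAr -?scalemxAl -?scalemxAr ?scalerA.
rewrite -scalemxAl scalerA.
rewrite conj_unit // scale1r !mulmxA (uKV V1u) mul1mx -mulmxA (uK V2u).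
by rewrite mulmx1.
Qed.


Lemma lemA (U U' : X -> M) : phase_equiv U' U -> unitary_basis U -> (0 < d)%N ->
  forall x0, exists x0', PCUE (tagW U x0) (tagW U' x0').
Proof.
case=> g [hg [V1 [V2 [s [V1u V2u sbij Hs]]]]] bU d0 x0.
have [Uu _] := bU.
exists (s x0).
have key : forall y, adjmx (U' (s x0)) *m U' (s y) =
    ((g x0)^* * g y) *: cj V2 (adjmx (U x0) *m U y).
  move=> y; rewrite !Hs /= !adjM adjZ /cj; floats; congr (_ *: _).
  by rewrite !mulmxA (cVV _ V1u).
pose h A := (g x0)^* * g (odflt x0 [pick y | (y != x0) && (A == adjmx (U x0) *m U y)]).
have hpk : forall y, y != x0 -> h (adjmx (U x0) *m U y) = (g x0)^* * g y.
  move=> y yx0; rewrite /h; case: pickP => [z /andP [zx0 /eqP e] | /(_ y)]; last first.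
    by rewrite yx0 eqxx.
  by rewrite /= (inj_basis d0 bU (uinjl (adj_unitary (Uu x0)) e)).
exists h; split; first by move=> A _; rewrite normrM norm_conjC !hg mulr1.
exists V2; split => // B; split.
- case=> y' y'x0 ->.
  case: sbij => t st ts.
  have yx0 : t y' != x0 by apply: contra y'x0 => /eqP <-; rewrite ts.
  rewrite -(ts y') key.
  exists ((g x0)^* * g (t y') *: (adjmx (U x0) *m U (t y'))).
    by exists (adjmx (U x0) *m U (t y')); [exists (t y') | rewrite hpk].
  by rewrite -cjZ.
- case=> A' [A [y yx0 ->] ->] ->.
  exists (s y); first by apply: contra yx0 => /eqP /(bij_inj sbij) ->.
  by rewrite key hpk // -cjZ.
Qed.

Lemma lemB (U U' : X -> M) x0 x0' : PCUE (tagW U x0) (tagW U' x0') ->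
  unitary_basis U -> unitary_basis U' -> (0 < d)%N -> phase_equiv U' U.
Proof.
case=> f [hf [V [Vu HV]]] bU bU' d0.
have [Uu _] := bU; have [U'u _] := bU'.
have HW : forall x, x != x0 -> exists2 x', x' != x0' &
    cj V (f (adjmx (U x0) *m U x) *: (adjmx (U x0) *m U x)) = adjmx (U' x0') *m U' x'.
  move=> x xx0; have := proj2 (HV (cj V (f (adjmx (U x0) *m U x) *: (adjmx (U x0) *m U x)))).
  case.
    by exists (f (adjmx (U x0) *m U x) *: (adjmx (U x0) *m U x)) => //; exists (adjmx (U x0) *m U x) => //; exists x.
  by move=> x' h1 h2; exists x'.
pose s x := if x == x0 then x0' else odflt x0' [pick x' | (x' != x0') &&
   (cj V (f (adjmx (U x0) *m U x) *: (adjmx (U x0) *m U x)) == adjmx (U' x0') *m U' x')].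
have Hs1 : forall x, x != x0 -> s x != x0' /\
    cj V (f (adjmx (U x0) *m U x) *: (adjmx (U x0) *m U x)) = adjmx (U' x0') *m U' (s x).
  move=> x xx0; rewrite /s (negbTE xx0); case: pickP => [x' /andP [h1 /eqP h2] | H] //.
  by case: (HW x xx0) => x' h1 h2; move: (H x'); rewrite h1 h2 eqxx.
exists (fun x => if x == x0 then 1 else f (adjmx (U x0) *m U x)); split.
  move=> x; case: eqP => [_ | /eqP xx0]; first exact: normr1.
  by apply: hf; exists x.
exists (U' x0' *m adjmx V *m adjmx (U x0)), V, s; split => //.
- by rewrite !mul_unitarymx // adj_unitary.
- have surj : forall y, exists x, s x = y.
    move=> y; case: (eqVneq y x0') => [-> | yx]; first by exists x0; rewrite /s eqxx.
    have : tagW U' x0' (adjmx (U' x0') *m U' y) by exists y.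
    case/HV => _ [_ [x xx0 ->] ->] e; exists x.
    have [_ e2] := Hs1 x xx0.
    apply: (inj_basis d0 bU'); apply: (uinjl (adj_unitary (U'u x0'))).
    by rewrite -e2 e.
  pose r y := odflt x0 [pick x | s x == y].
  have sr : cancel r s.
    move=> y; rewrite /r; case: pickP => [x /eqP // | H].
    by case: (surj y) => x e; move: (H x); rewrite e eqxx.
  have [r' rr' r'r] := injF_bij (can_inj sr).
  exists r => // x.
  by rewrite -{1}(r'r x) sr r'r.
- move=> x /=; case: (eqVneq x x0) => [-> | xx0].
    by rewrite /s eqxx scale1r ?mulmxA (cVV _ (Uu x0)) (cVV _ Vu).
  have [_ e2] := Hs1 x xx0.
  apply: (uinjl (adj_unitary (U'u x0'))).
  rewrite -e2 /cj; floats; congr (_ *: _).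
  by rewrite !mulmxA (uKV (U'u x0')) mul1mx.
Qed.

End H.

Theorem theorem2p15 (R : realType) (d : nat) (X : finType)
    (U U' : X -> 'M[R[i]]_d) :
  (2 <= d)%N -> #|X| = (d ^ 2)%N ->
  unitary_basis U -> unitary_basis U' ->
  [<-> phase_equiv U U';
       exists x0 x0', PCUE (tagW U x0) (tagW U' x0');
       forall x0, exists x0', PCUE (tagW U x0) (tagW U' x0');
       same_fan_systems_PCUE U U'].
Proof.
move=> d2 cardX bU bU'.
have d0 : (0 < d)%N by apply: leq_trans d2.
have [x1 _] : exists x : X, x \in X.
  apply/card_gt0P; rewrite cardX expn_gt0 d0 //.
have cov : forall (V : X -> 'M[R[i]]_d) x0 A, tagW V x0 A ->
    exists2 S, fan (tagW V x0) S & S A.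
  by move=> V x0 A h; apply: (@mass_cover _ _ X (fun y => y != x0)).
tfae.
- move=> h; have [x0' hp] := lemA (phase_sym h) bU d0 x1.
  by exists x1, x0'.
- case=> x0 [x0' hp]; have h0 := lemB hp bU bU' d0; exact: (lemA h0 bU d0).
- move=> h2; split.
    by move=> x0; case: (h2 x0) => x0' hp; exists x0'; apply: pcue_fan.
  have [x0' hp] := h2 x1.
  move=> y0; have [x0 hq] := lemA (phase_sym (lemB hp bU bU' d0)) bU' d0 y0.
  by exists x0; apply: pcue_fan.
- case=> h _; case: (h x1) => x0' hf.
  have hp := fan_pcue hf (@cov U x1) (@cov U' x0').
  exact: phase_sym (lemB hp bU bU' d0).
Qed.
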